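(* Let $M$ be a strongly regular $po$-$\Gamma$-semigroup. Then for every $a\in M$ there exist $y\in M$ and $\gamma,\mu\in\Gamma$ such that $$a\le a\gamma y\mu a,\quad y\le y\mu a\gamma y,\quad\text{and}\quad a\gamma y=y\gamma a=y\mu a=a\mu y.$$
   Context: A $po$-$\Gamma$-semigroup is a triple $(M,\Gamma,\le)$ where $M,\Gamma$ are nonempty sets with a map $M\times\Gamma\times M\to M$, $(a,\gamma,b)\mapsto a\gamma b$, satisfying $(a\gamma b)\mu c=a\gamma(b\mu c)$ for all $a,b,c\in M$, $\gamma,\mu\in\Gamma$, and $\le$ is a partial order on $M$ such that $a\le b$ implies $a\gamma c\le b\gamma c$ and $c\gamma a\le c\gamma b$ for all $c\in M$, $\gamma\in\Gamma$. $M$ is strongly regular if for every $a\in M$ there exist $x\in M$ and $\gamma,\mu\in\Gamma$ such that $a\le a\gamma x\mu a$ and $a\gamma x=x\gamma a=x\mu a=a\mu x$. *)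

(* Defs.v *)
From Stdlib Require Import RelationClasses.

Record poGammaSemigroup (M G : Type) : Type := {
  op : M -> G -> M -> M;
  le : M -> M -> Prop;
  M_inhabited : inhabited M;
  G_inhabited : inhabited G;
  op_assoc : forall (a b c : M) (g m : G), op (op a g b) m c = op a g (op b m c);
  le_refl : forall a, le a a;
  le_antisym : forall a b, le a b -> le b a -> a = b;
  le_trans : forall a b c, le a b -> le b c -> le a c;
  le_compat_r : forall a b c g, le a b -> le (op a g c) (op b g c);
  le_compat_l : forall a b c g, le a b -> le (op c g a) (op c g b)
}.

Arguments op {M G} _ _ _ _.
Arguments le {M G} _ _ _.

Definition strongly_regular {M G : Type} (S : poGammaSemigroup M G) : Prop :=
  forall a : M, exists (x : M) (g m : G),
    le S a (op S (op S a g x) m a) /\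
    op S a g x = op S x g a /\ op S x g a = op S x m a /\ op S x m a = op S a m x.

(* Main.v *)
Require Import Defs.

Theorem theorem8 (M G : Type) (S : poGammaSemigroup M G) :
  strongly_regular S ->
  forall a : M, exists (y : M) (g m : G),
    le S a (op S (op S a g y) m a) /\
    le S y (op S (op S y m a) g y) /\
    (op S a g y = op S y g a /\ op S y g a = op S y m a /\ op S y m a = op S a m y).
Proof.
  intros HS a. destruct (HS a) as (x & g & m & H1 & E1 & E2 & E3).
  pose proof (@op_assoc M G S) as A.
  exists (op S x m (op S a g x)), g, m.
  assert (K : op S (op S a g x) m (op S a g x) = op S (op S a g x) g (op S a g x)).
  { transitivity (op S (op S a g x) m (op S a m x)).
    { rewrite <- E3, <- E2, <- E1; reflexivity. }
    rewrite <- (A (op S a g x) a x m m).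
    rewrite (A a x a g m), <- E2, <- (A a x a g g).
    rewrite (A (op S a g x) a x g m).
    rewrite <- E3, <- E2, <- E1. reflexivity. }
  assert (Y : op S x m (op S a g x) = op S (op S a g x) g x).
  { rewrite <- A, E1, E2. reflexivity. }
  split; [|split; [|split; [|split]]].
  - eapply le_trans; [exact H1|].
    eapply le_trans; [apply le_compat_l; exact H1|].
    rewrite !A. apply le_refl.
  - assert (H2 : le S (op S a g x) (op S (op S (op S a g x) m a) g x))
      by (apply le_compat_r; exact H1).
    eapply le_trans; [apply le_compat_l; exact H2|].
    assert (H3 : le S (op S (op S (op S a g x) m a) g x)
                   (op S (op S (op S (op S (op S a g x) m a) g x) m a) g x))
      by (apply le_compat_r; apply le_compat_r; apply le_compat_r; exact H1).
    eapply le_trans; [apply le_compat_l; exact H3|].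
    rewrite !A. apply le_refl.
  - rewrite <- A, K. rewrite Y. rewrite (A (op S a g x) x a g g), <- E1. reflexivity.
  - rewrite Y, (A (op S a g x) x a g g), (A (op S a g x) x a g m), <- E1, <- E2, <- E1. reflexivity.
  - rewrite Y, (A (op S a g x) x a g m), <- E2, <- E1.
    rewrite <- Y, <- (A a x (op S a g x) m m), <- E3, <- E2, <- E1, K. reflexivity.
Qed.
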